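(* If $T\in\mathcal{T}_3$ has $n\ge 4$ vertices and $t$ twigs then $\mu(T)<\frac{3n}{4}-\frac{2t}{5}$.
   Context: A leaf is a vertex of degree at most 1; an internal vertex has degree at least 2. $\mathcal{T}_3$ is the set of finite trees with at least one internal vertex in which every internal vertex has degree at least 3. A vertex $v$ is a twig if $d(v)\ge 2$ and at least $d(v)-1$ of its neighbours are leaves. A subtree is a nonempty vertex set inducing a connected subgraph; $\mu(T)$ is the average number of vertices over all subtrees of $T$. *)

(* Defs.v *)
From mathcomp Require Import all_boot all_order all_algebra.
Set Implicit Arguments. Unset Strict Implicit. Unset Printing Implicit Defensive.
Import Order.TTheory GRing.Theory Num.Theory.

Definition simple_graph (V : finType) (e : rel V) : Prop :=
  symmetric e /\ irreflexive e.

Definition deg (V : finType) (e : rel V) (v : V) : nat := #|[set u | e v u]|.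

(* the subgraph induced by S is connected (S nonempty is asked separately) *)
Definition induced_connected (V : finType) (e : rel V) (S : {set V}) : bool :=
  [forall x in S, forall y in S,
     connect [rel a b | [&& e a b, a \in S & b \in S]] x y].

(* A tree: nonempty, connected, with exactly |V| - 1 edges
   (the ordered pairs (u,v) with e u v number 2(|V|-1)). *)
Definition is_tree (V : finType) (e : rel V) : Prop :=
  simple_graph e /\ 0 < #|V| /\ induced_connected e [set: V] /\
  #|[set p : V * V | e p.1 p.2]| = 2 * (#|V| - 1).

Definition leaf (V : finType) (e : rel V) (v : V) : bool := deg e v <= 1.
Definition internal (V : finType) (e : rel V) (v : V) : bool := 2 <= deg e v.

Definition in_T3 (V : finType) (e : rel V) : Prop :=
  is_tree e /\ (exists v, internal e v) /\
  (forall v, internal e v -> 3 <= deg e v).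

Definition twig (V : finType) (e : rel V) (v : V) : bool :=
  (2 <= deg e v) && (deg e v - 1 <= #|[set u | e v u & leaf e u]|).

Definition num_twigs (V : finType) (e : rel V) : nat := #|[set v | twig e v]|.

Definition subtrees (V : finType) (e : rel V) : {set {set V}} :=
  [set S : {set V} | (S != set0) && induced_connected e S].

Definition mu (V : finType) (e : rel V) : rat :=
  (\sum_(S in subtrees e) #|S|)%:R / #|subtrees e|%:R.

(* Main.v *)
Require Import Defs.
From mathcomp Require Import all_boot all_order all_algebra.
From mathcomp Require Import zify ring lra.
Import Order.TTheory GRing.Theory Num.Theory.
Set Implicit Arguments. Unset Strict Implicit. Unset Printing Implicit Defensive.

Notation rS e S := [rel a b | [&& e a b, a \in S & b \in S]].

Lemma icP (V : finType) (e : rel V) (S : {set V}) :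
  induced_connected e S <-> forall a b, a \in S -> b \in S -> connect (rS e S) a b.
Proof.
split.
- move=> /forallP H a b aS bS. move: (H a) => /implyP /(_ aS) /forallP /(_ b) /implyP.
  by apply.
- move=> H; apply/forallP => a; apply/implyP => aS; apply/forallP => b; apply/implyP => bS.
  exact: H.
Qed.

Lemma closed_stay (V : finType) (r : rel V) (A : pred V) a b :
  (forall x y, A x -> r x y -> A y) -> A a -> connect r a b -> A b.
Proof.
move=> cl Aa /connectP [p pth ->]; elim: p a Aa pth => //= x p IH a Aa /andP[rax pth].
exact: IH (cl _ _ Aa rax) pth.
Qed.

Lemma remove_conn (V : finType) (e : rel V) (S : {set V}) y :
  simple_graph e -> induced_connected e S -> y \in S ->
  (forall a b, a \in S -> b \in S -> e y a -> e y b -> a = b) ->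
  induced_connected e (S :\ y).
Proof.
move=> [sym irr] /icP Sc yS uniq; apply/icP => a b.
rewrite !in_setD1 => /andP[ay aS] /andP[By bS].
have := Sc a b aS bS => /connectP [p pth bE].
have key : forall p, path (rS e S) a p ->
  (last a p != y -> connect (rS e (S :\ y)) a (last a p)) /\
  (last a p = y -> forall w, w \in S -> e y w -> connect (rS e (S :\ y)) a w).
  elim/last_ind => [|q z IH] /=.
    by split => [_|ayE]; [exact: connect0| move: ay; rewrite ayE eqxx].
  rewrite rcons_path last_rcons => /andP[pth' rz].
  have [IH1 IH2] := IH pth'.
  move: rz => /= /and3P[ez0 z0S zS].
  split.
  - move=> zy. case: (eqVneq (last a q) y) => [z0y|z0y].
      by apply: (IH2 z0y) => //; rewrite -z0y.
    apply: connect_trans (IH1 z0y) _; apply: connect1 => /=.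
    by rewrite ez0 !in_setD1 z0y zy z0S zS.
  - move=> zE w wS eyw.
    have z0y : last a q != y.
      apply/eqP => E; move: ez0; rewrite E zE irr //.
    have eyz0 : e y (last a q) by rewrite sym -zE.
    by rewrite (uniq _ _ wS z0S eyw eyz0); exact: IH1.
have [H1 _] := key p pth.
by rewrite bE; apply: H1; rewrite -bE.
Qed.

Lemma conn_mono (V : finType) (e : rel V) (S T : {set V}) a b :
  S \subset T -> connect (rS e S) a b -> connect (rS e T) a b.
Proof.
move=> sST; apply: connect_sub => x y /= /and3P[exy xS yS].
by apply: connect1 => /=; rewrite exy !(subsetP sST).
Qed.

Lemma add_conn (V : finType) (e : rel V) (S : {set V}) u x :
  simple_graph e -> induced_connected e S -> u \in S -> e u x ->
  induced_connected e (x |: S).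
Proof.
move=> [sym irr] /icP Sc uS eux; apply/icP.
have sub : S \subset x |: S by apply/subsetP => z zS; rewrite in_setU1 zS orbT.
have xu : connect (rS e (x |: S)) x u.
  by apply: connect1 => /=; rewrite sym eux !in_setU1 eqxx uS orbT.
have ux : connect (rS e (x |: S)) u x.
  by apply: connect1 => /=; rewrite eux !in_setU1 eqxx uS orbT.
have toU : forall a, a \in x |: S -> connect (rS e (x |: S)) a u.
  move=> a; rewrite in_setU1 => /orP[/eqP->//|aS].
  exact: conn_mono sub (Sc _ _ aS uS).
have fromU : forall a, a \in x |: S -> connect (rS e (x |: S)) u a.
  move=> a; rewrite in_setU1 => /orP[/eqP->//|aS].
  exact: conn_mono sub (Sc _ _ uS aS).
move=> a b aS bS; exact: connect_trans (toU a aS) (fromU b bS).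
Qed.


Lemma inj_le (T1 T2 : finType) (f : T1 -> T2) (P : {set T1}) (Q : {set T2}) :
  {in P &, injective f} -> (forall a, a \in P -> f a \in Q) -> #|P| <= #|Q|.
Proof.
move=> inj fPQ; rewrite -(card_in_imset inj); apply: subset_leq_card.
by apply/subsetP => b /imsetP [a aP ->]; exact: fPQ.
Qed.

Lemma exists_other (V : finType) (x : V) : 2 <= #|V| -> exists z, z != x.
Proof.
move=> h; have : 0 < #|[set~ x]| by rewrite cardsC1; lia.
by case/card_gt0P => z; rewrite in_setC1 => zx; exists z.
Qed.

Lemma exists_other2 (V : finType) (x u : V) : 3 <= #|V| -> exists z, (z != x) && (z != u).
Proof.
move=> h; have : 0 < #|[set~ x] :\ u|.
  have := cardsD1 u [set~ x]; rewrite cardsC1 => E.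
  have : (u \in [set~ x]) <= 1 by case: (u \in _).
  lia.
by case/card_gt0P => z; rewrite in_setD1 in_setC1 => /andP[zu zx]; exists z; rewrite zu zx.
Qed.

Lemma sub_in (V : finType) (e : rel V) S :
  (S \in subtrees e) = (S != set0) && induced_connected e S.
Proof. by rewrite inE. Qed.

Lemma sub_single (V : finType) (e : rel V) x : [set x] \in subtrees e.
Proof.
rewrite sub_in; apply/andP; split; first by apply/set0Pn; exists x; rewrite set11.
by apply/icP => a b; rewrite !in_set1 => /eqP-> /eqP->; exact: connect0.
Qed.

Lemma sub_add (V : finType) (e : rel V) S u x :
  simple_graph e -> S \in subtrees e -> u \in S -> e u x -> x |: S \in subtrees e.
Proof.
move=> sg; rewrite !sub_in => /andP[_ Sc] uS eux; apply/andP; split.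
  by apply/set0Pn; exists x; rewrite setU11.
exact: add_conn sg Sc uS eux.
Qed.

Lemma sub_rm (V : finType) (e : rel V) S y :
  simple_graph e -> S \in subtrees e -> y \in S -> S != [set y] ->
  (forall a b, a \in S -> b \in S -> e y a -> e y b -> a = b) ->
  S :\ y \in subtrees e.
Proof.
move=> sg; rewrite !sub_in => /andP[_ Sc] yS Sy uniq; apply/andP; split.
  apply/negP => /eqP E; move: Sy; rewrite -(setD1K yS) E setU0 eqxx //.
exact: remove_conn sg Sc yS uniq.
Qed.

Definition fullconn (V : finType) (e : rel V) := forall x y, connect (rS e [set: V]) x y.

Lemma leaf_uniq (V : finType) (e : rel V) x a b :
  leaf e x -> e x a -> e x b -> a = b.
Proof.
rewrite /leaf /deg => /card_le1_eqP h xa xb.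
by apply: h; rewrite inE.
Qed.

Lemma leaf_nb (V : finType) (e : rel V) x :
  simple_graph e -> fullconn e -> 2 <= #|V| -> exists u, e x u.
Proof.
move=> [sym irr] fc h; have [z zx] := exists_other x h.
case: (boolP [exists u, e x u]) => [/existsP//|/existsPn nb]; exfalso.
have : pred1 x z.
  apply: (closed_stay (r := rS e [set: V]) (A := pred1 x)) (fc x z) => //.
  by move=> a b /= /eqP -> /and3P[exb _ _]; move: (nb b); rewrite exb.
  by rewrite /= eqxx.
by rewrite /= (negbTE zx).
Qed.

Lemma leaf_nb_nonleaf (V : finType) (e : rel V) x u :
  simple_graph e -> fullconn e -> 3 <= #|V| -> leaf e x -> e x u -> ~~ leaf e u.
Proof.
move=> [sym irr] fc h lx exu; apply/negP => lu.
have [z /andP[zx zu]] := exists_other2 x u h.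
have : [pred a | (a == x) || (a == u)] z.
  apply: (closed_stay (r := rS e [set: V])) (fc x z); last by rewrite /= eqxx.
  move=> a b /= /orP[/eqP->|/eqP->] /and3P[eab _ _].
    by rewrite (leaf_uniq lx eab exu) eqxx orbT.
  by rewrite (leaf_uniq lu eab (_ : e u x)) ?eqxx // sym.
by rewrite /= (negbTE zx) (negbTE zu).
Qed.

Lemma deg_leaf (V : finType) (e : rel V) x :
  simple_graph e -> fullconn e -> 2 <= #|V| -> leaf e x -> deg e x = 1.
Proof.
move=> sg fc h lx; have [u exu] := leaf_nb x sg fc h.
have : 0 < deg e x by apply/card_gt0P; exists u; rewrite inE.
by move: lx; rewrite /leaf; lia.
Qed.

Definition cnt (V : finType) (e : rel V) v := #|[set S in subtrees e | v \in S]|.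

Lemma leaf_cnt (V : finType) (e : rel V) x u :
  simple_graph e -> leaf e x -> e x u -> 2 * cnt e x = 2 + cnt e u.
Proof.
move=> sg lx exu; have [sym irr] := sg.
have ux : u != x by apply/eqP => E; move: exu; rewrite E irr.
set A' := [set S in subtrees e | (x \in S) && (u \in S)].
set B2 := [set S in subtrees e | (u \in S) && (x \notin S)].
have xuS : forall S, S \in subtrees e -> x \in S -> S != [set x] -> u \in S.
  move=> S; rewrite sub_in => /andP[Sne /icP Sc] xS Sx.
  apply/negPn/negP => uS.
  have [z zS zx] : exists2 z, z \in S & z != x.
    case: (boolP [exists z in S, z != x]) => [/exists_inP//|/exists_inPn H]; exfalso; move: Sx.
    suff -> : S = [set x] by rewrite eqxx.
    apply/setP => w; rewrite in_set1; apply/idP/idP => [wS|/eqP->//].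
    by have := H w wS; rewrite negbK.
  have : pred1 x z.
    apply: (closed_stay (r := rS e S) (A := pred1 x)) (Sc x z xS zS); last by rewrite /= eqxx.
    move=> a b /= /eqP -> /and3P[exb _ bS].
    by move: uS; rewrite -(leaf_uniq lx exb exu) bS.
  by rewrite /= (negbTE zx).
have E1 : [set S in subtrees e | x \in S] :\ [set x] = A'.
  rewrite /A'; apply/setP => S; rewrite !inE -?sub_in; apply/idP/idP.
    by case/and3P => Sx Ssub xS; rewrite Ssub xS (xuS S).
  case/and3P => Ssub xS uS; rewrite Ssub xS !andbT.
  by apply/negP => /eqP E; move: uS; rewrite E in_set1 (negbTE ux).
have c1 : cnt e x = 1 + #|A'|.
  by rewrite /cnt (cardsD1 [set x]) E1 inE sub_single set11.
have c2 : cnt e u = #|A'| + #|B2|.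
  rewrite /cnt -(cardsID [set S : {set V} | x \in S]).
  have -> : [set S in subtrees e | u \in S] :&: [set S : {set V} | x \in S] = A'.
    by apply/setP => S; rewrite /A' !inE; case: (x \in S); case: (u \in S); rewrite ?andbT ?andbF.
  have -> : [set S in subtrees e | u \in S] :\: [set S : {set V} | x \in S] = B2.
    by apply/setP => S; rewrite /B2 !inE; case: (x \in S); case: (u \in S); rewrite ?andbT ?andbF.
  by [].
have l1 : #|B2| <= #|A'|.
  apply: (inj_le (f := fun S => x |: S)).
    move=> S1 S2; rewrite !inE -?sub_in => /and3P[_ _ n1] /and3P[_ _ n2] E.
    by rewrite -(setU1K n1) E setU1K.
  move=> S; rewrite !inE -?sub_in => /and3P[Ss uS _].
  have eux : e u x by rewrite sym.
  by rewrite !inE -?sub_in (sub_add sg Ss uS eux) ?setU11 ?in_setU1 ?eqxx ?uS ?orbT.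
have l2 : #|A'| <= #|B2|.
  apply: (inj_le (f := fun S => S :\ x)).
    move=> S1 S2; rewrite !inE -?sub_in => /and3P[_ n1 _] /and3P[_ n2 _] E.
    by rewrite -(setD1K n1) E setD1K.
  move=> S; rewrite !inE -?sub_in => /and3P[Ss xS uS].
  rewrite !inE -?sub_in sub_rm ?setD11 ?in_setD1 ?ux ?uS //.
    by rewrite eqxx.
    by apply/negP => /eqP E; move: uS; rewrite E in_set1 (negbTE ux).
  by move=> a b _ _ xa xb; exact: leaf_uniq lx xa xb.
lia.
Qed.


Lemma rm_leaves (V : finType) (e : rel V) (Y : {set V}) S z :
  simple_graph e -> S \in subtrees e -> (forall y, y \in Y -> leaf e y) ->
  z \in S -> z \notin Y -> S :\: Y \in subtrees e.
Proof.
move=> sg Ss lY zS zY.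
move: {2}#|S :&: Y| (leqnn #|S :&: Y|) => n.
elim: n S Ss zS => [|n IH] S Ss zS hn.
  have -> : S :\: Y = S; last by [].
  apply/setP => x; rewrite in_setD; case xY: (x \in Y) => //=.
  case xS: (x \in S) => //.
  have : 0 < #|S :&: Y| by apply/card_gt0P; exists x; rewrite in_setI xS xY.
  lia.
case: (boolP (S :&: Y == set0)) => [/eqP E0|/set0Pn [y]].
  apply: (IH S Ss zS); by rewrite E0 cards0.
rewrite in_setI => /andP[yS yY].
have zy : z != y by apply/eqP => E; move: zY; rewrite E yY.
have S'sub : S :\ y \in subtrees e.
  apply: sub_rm => //.
    by apply/negP => /eqP E; move: zS; rewrite E in_set1 (negbTE zy).
  by move=> a b _ _ ya yb; exact: leaf_uniq (lY y yY) ya yb.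
have -> : S :\: Y = (S :\ y) :\: Y.
  by apply/setP => x; rewrite !inE; case: (eqVneq x y) => [->|xy]; rewrite ?yY ?xy.
apply: (IH _ S'sub); first by rewrite in_setD1 zy zS.
have : #|S :&: Y| = 1 + #|(S :\ y) :&: Y|.
  rewrite (cardsD1 y (S :&: Y)) in_setI yS yY; congr (_ + _).
  by apply: eq_card => x; rewrite !inE; case: (x == y); case: (x \in S); case: (x \in Y).
lia.
Qed.

Lemma cardsU_disj (T : finType) (A B : {set T}) :
  [disjoint A & B] -> #|A :|: B| = #|A| + #|B|.
Proof. by move=> d; rewrite cardsU; move: d; rewrite -setI_eq0 => /eqP ->; rewrite cards0 subn0. Qed.

Lemma disjP (T : finType) (A B : {set T}) :
  (forall x, x \in A -> x \in B -> False) -> [disjoint A & B].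
Proof.
move=> H; rewrite -setI_eq0; apply/eqP/setP => x; rewrite in_setI in_set0.
by apply/negbTE/negP => /andP[xA xB]; exact: H xA xB.
Qed.

Lemma twig_lemma (V : finType) (e : rel V) v :
  simple_graph e -> ~~ leaf e v ->
  (forall a b, e v a -> e v b -> ~~ leaf e a -> ~~ leaf e b -> a = b) ->
  let X := [set u | e v u & leaf e u] in 0 < #|X| ->
  cnt e v * (2 ^ #|X| + 1) <= 2 ^ #|X| * #|subtrees e| /\
  #|X| + cnt e v <= #|subtrees e|.
Proof.
move=> sg nlv onl X Xpos; have [sym irr] := sg.
have vX : v \notin X by rewrite inE (negbTE nlv) andbF.
set R := [set S in subtrees e | v \in S].
set R0 := [set S in subtrees e | (v \in S) && (S :&: X == set0)].
have vR0 : [set v] \in R0.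
  rewrite inE sub_single set11 /=; apply/eqP/setP => x; rewrite !inE.
  by case: (eqVneq x v) => [->|]; rewrite ?(negbTE nlv) ?andbF.
have Xleaf : forall y, y \in X -> leaf e y by move=> y; rewrite inE => /andP[].
have ha : cnt e v <= #|R0| * 2 ^ #|X|.
  rewrite -card_powerset -cardsX /cnt -/R.
  apply: (inj_le (f := fun S => (S :\: X, S :&: X))).
    move=> S1 S2 _ _ [E1 E2].
    by rewrite -(setID S1 X) -(setID S2 X) E1 E2.
  move=> S; rewrite inE => /andP[Ss vS].
  rewrite inE /= powersetE subsetIr andbT.
  have : S :\: X \in subtrees e by apply: (rm_leaves sg Ss Xleaf vS vX).
  move=> h; rewrite inE h in_setD vX vS /=.
  by apply/eqP/setP => x; rewrite !inE; case: (e v x); case: (leaf e x); rewrite /= ?andbF.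
set Sing := [set [set x] | x in X].
set Img := [set S :\ v | S in R0 :\ [set v]].
have cSing : #|Sing| = #|X| by rewrite card_imset //; exact: set1_inj.
have cImg : #|Img| = #|R0| - 1.
  rewrite card_in_imset; first by have := cardsD1 [set v] R0; rewrite vR0 /= => ->; rewrite add1n subn1.
  move=> S1 S2; rewrite !inE => /and3P[_ _ /andP[v1 _]] /and3P[_ _ /andP[v2 _]] E.
  by rewrite -(setD1K v1) E setD1K.
have d1 : [disjoint Sing & R].
  apply/disjP => S /imsetP [x xX ->]; rewrite inE => /andP[_].
  by rewrite in_set1 => /eqP E; move: vX; rewrite E xX.
have d2 : [disjoint Sing :|: R & Img].
  apply/disjP => S; rewrite in_setU => /orP[/imsetP [x xX ->]|].
    move=> /imsetP [S' ]; rewrite !inE => /and3P[_ _ /andP[_ /eqP S'X]] E.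
    have : x \in S' :&: X by rewrite in_setI xX andbT; have := set11 x; rewrite E in_setD1 => /andP[].
    by rewrite S'X inE.
  rewrite inE => /andP[_ vS] /imsetP [S' _ E]; move: vS; rewrite E in_setD1 eqxx.
  by [].
have subN : Sing :|: R :|: Img \subset subtrees e.
  apply/subsetP => S; rewrite !in_setU => /orP[/orP[/imsetP [x _ ->]|]|].
  - exact: sub_single.
  - by rewrite inE => /andP[].
  move=> /imsetP [S' ]; rewrite !inE => /andP[S'v /and3P[S's vS' /eqP S'X]] ->.
  rewrite -sub_in; apply: sub_rm => //; first by rewrite sub_in.
  move=> a b aS bS va vb; apply: onl => //.
    apply/negP => la; have : a \in S' :&: X by rewrite in_setI aS inE va la.
    by rewrite S'X inE.
  apply/negP => lb; have : b \in S' :&: X by rewrite in_setI bS inE vb lb.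
  by rewrite S'X inE.
have hb : #|X| + cnt e v + (#|R0| - 1) <= #|subtrees e|.
  have := subset_leq_card subN.
  by rewrite (cardsU_disj d2) (cardsU_disj d1) cSing cImg /cnt -/R.
have r0pos : 0 < #|R0| by apply/card_gt0P; exists [set v].
split; last by lia.
set P := 2 ^ #|X|.
have : cnt e v + #|R0| <= #|subtrees e| by lia.
move: ha; rewrite -/P => ha hN.
nia.
Qed.


Lemma csum (T : finType) (P : pred T) : #|[set x | P x]| = \sum_x (P x : nat).
Proof.
rewrite -sum1_card big_mkcond /=; apply: eq_bigr => x _; rewrite inE; by case: (P x).
Qed.

Lemma csumP (T : finType) (P : pred T) : #|[set x | P x]| = \sum_(x | P x) 1.
Proof. by rewrite csum [RHS]big_mkcond /=; apply: eq_bigr => x _; case: (P x). Qed.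

Lemma sum_size (V : finType) (e : rel V) :
  \sum_(S in subtrees e) #|S| = \sum_v cnt e v.
Proof.
transitivity (\sum_(S in subtrees e) \sum_v (v \in S : nat)).
  by apply: eq_bigr => S _; rewrite -sum1_card big_mkcond.
rewrite exchange_big /=; apply: eq_bigr => v _.
rewrite /cnt csum big_mkcond /=; apply: eq_bigr => S _.
by rewrite !inE; case: ((S != set0) && induced_connected e S).
Qed.

Lemma handshake (V : finType) (e : rel V) :
  \sum_v deg e v = #|[set p : V * V | e p.1 p.2]|.
Proof.
rewrite csum /deg.
under eq_bigr => v _ do rewrite csum.
by rewrite pair_big /=.
Qed.

Lemma two_leaves_lt (V : finType) (e : rel V) :
  simple_graph e -> fullconn e -> 3 <= #|V| -> (exists v, ~~ leaf e v) ->
  2 * (\sum_(x | leaf e x) 1) < #|subtrees e|.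
Proof.
move=> sg fc n3 [v nlv]; have [sym irr] := sg.
rewrite -csumP; set Ls := [set x | leaf e x].
pose nb x := odflt x [pick u | e x u].
have nbP : forall x, leaf e x -> e x (nb x).
  move=> x lx; rewrite /nb; case: pickP => [u //|none].
  have [u eu] := leaf_nb x sg fc (ltnW n3); by rewrite none in eu.
set Sing := [set [set x] | x : V].
set Pr := [set x |: [set nb x] | x in Ls].
have cS : #|Sing| = #|V| by rewrite card_imset //; exact: set1_inj.
have cP : #|Pr| = #|Ls|.
  apply: card_in_imset => x y; rewrite !inE => lx ly E.
  have : x \in y |: [set nb y] by rewrite -E setU11.
  rewrite in_setU1 in_set1 => /orP[/eqP //|/eqP xn].
  have := leaf_nb_nonleaf sg fc n3 ly (nbP y ly); by rewrite -xn lx.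
have d : [disjoint Sing & Pr].
  apply/disjP => S /imsetP [z _ ->] /imsetP [x lx E].
  have h1 : x \in [set z] by rewrite E setU11.
  have h2 : nb x \in [set z] by rewrite E in_setU1 set11 orbT.
  move: h1 h2; rewrite !in_set1 => /eqP xz /eqP E2.
  rewrite inE in lx; have := nbP x lx; by rewrite E2 -xz irr.
have sub : Sing :|: Pr \subset subtrees e.
  apply/subsetP => S; rewrite in_setU => /orP[/imsetP [z _ ->]|/imsetP [x lx ->]].
    exact: sub_single.
  rewrite inE in lx; apply: (sub_add sg (sub_single e (nb x))); first exact: set11.
  by rewrite sym; exact: nbP.
have := subset_leq_card sub; rewrite (cardsU_disj d) cS cP.
have : #|Ls| + #|~: Ls| = #|V| by rewrite cardsC.
have : 0 < #|~: Ls| by apply/card_gt0P; exists v; rewrite !inE.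
move=> h1 h2 h3; apply: leq_trans h3; lia.
Qed.

Lemma star_all (V : finType) (e : rel V) v0 :
  simple_graph e -> fullconn e -> (forall u, e v0 u -> leaf e u) ->
  forall x, (x == v0) || e v0 x.
Proof.
move=> [sym irr] fc allL x.
apply: (closed_stay (r := rS e [set: V]) (A := [pred a | (a == v0) || e v0 a])) (fc v0 x);
  last by rewrite /= eqxx.
move=> a b /= /orP[/eqP ->|ea] /and3P[eab _ _]; first by rewrite eab orbT.
by rewrite (leaf_uniq (allL a ea) eab (_ : e a v0)) ?eqxx // sym.
Qed.


Lemma pow_ineq p : 2 <= p -> 10 * 2 ^ p * (p + 2) <= (15 * p + 2) * (2 ^ p + 1).
Proof.
move=> hp; case: p hp => [|[|[|[|p]]]] //= _.
have : 1 <= 2 ^ p.+4 by rewrite expn_gt0.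
nia.
Qed.

Lemma main_nat (V : finType) (e : rel V) :
  in_T3 e -> 4 <= #|V| ->
  20 * (\sum_(S in subtrees e) #|S|) + 8 * num_twigs e * #|subtrees e|
    < 15 * #|V| * #|subtrees e|.
Proof.
move=> [[sg [n0 [icT edges]]] [[v0 iv0] T3]] n4.
have [sym irr] := sg.
have fc : fullconn e.
  move=> x y; have := (icP e [set: V]).1 icT; apply; by rewrite inE.
set n := #|V|.
set N := #|subtrees e|.
pose p v := #|[set u | e v u & leaf e u]|.
set L := \sum_(x | leaf e x) 1.
pose c := cnt e.
have n2 : 2 <= #|V| by lia.
have n3 : 3 <= #|V| by lia.
have leafdeg : forall x, leaf e x -> deg e x = 1 by move=> x; exact: deg_leaf sg fc n2.
have leafnl : forall x u, leaf e x -> e x u -> ~~ leaf e u.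
  by move=> x u; exact: leaf_nb_nonleaf sg fc n3.
have p_leaf : forall x, leaf e x -> p x = 0.
  move=> x lx; apply/eqP; rewrite cards_eq0; apply/eqP/setP => u; rewrite !inE.
  by case eu: (e x u) => //=; apply/negbTE; exact: leafnl lx eu.
have nl_deg : forall v, ~~ leaf e v -> 3 <= deg e v.
  by move=> v; rewrite /leaf -ltnNge => h; apply: T3; rewrite /internal.
have twig_nl : forall v, twig e v -> ~~ leaf e v.
  by move=> v /andP[h _]; rewrite /leaf -ltnNge.
have Nsub : forall v, c v <= N.
  by move=> v; apply: subset_leq_card; apply/subsetP => S; rewrite inE => /andP[].
have F2 : \sum_v deg e v = 2 * (n - 1) by rewrite handshake.
have F3 : \sum_v p v = L.
  transitivity (\sum_u \sum_v ((e v u && leaf e u) : nat)).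
    by rewrite exchange_big; apply: eq_bigr => v _; rewrite /p (@csum _ (fun u => e v u && leaf e u)).
  rewrite /L [RHS]big_mkcond; apply: eq_bigr => u _.
  case lu: (leaf e u).
    rewrite -(leafdeg u lu) /deg (@csum _ (fun v => e u v)); apply: eq_bigr => v _; by rewrite andbT sym.
  by apply: big1 => v _; rewrite andbF.
set SL := \sum_(x | leaf e x) c x.
set SN := \sum_(v | ~~ leaf e v) c v.
set SNp := \sum_(v | ~~ leaf e v) c v * p v.
have E0 : \sum_(S in subtrees e) #|S| = SL + SN.
  by rewrite sum_size (bigID (fun v => leaf e v)).
have E1 : 2 * SL = 2 * L + SNp.
  have h1 : forall x, leaf e x -> 2 * c x = 2 + \sum_u (e x u : nat) * c u.
    move=> x lx; have [u0 eu0] := leaf_nb x sg fc n2.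
    rewrite (leaf_cnt sg lx eu0) (bigD1 u0) //= eu0 mul1n big1 ?addn0 //.
    move=> u uu0; case exu: (e x u); rewrite ?mul0n //.
    by move: uu0; rewrite (leaf_uniq lx exu eu0) eqxx.
  rewrite /SL big_distrr /= (eq_bigr _ h1) big_split /=.
  congr (_ + _); first by rewrite /L big_distrr; apply: eq_bigr.
  rewrite exchange_big /SNp (bigID (fun u => leaf e u)) /= big1 ?add0n; last first.
    move=> u lu; apply: big1 => x lx; case exu: (e x u); rewrite ?mul0n //.
    by move: (leafnl x u lx exu); rewrite lu.
  apply: eq_bigr => u nlu.
  rewrite /p (@csum _ (fun x => e u x && leaf e x)) big_distrr /= [LHS]big_mkcond.
  apply: eq_bigr => x _; rewrite (sym u x); case: (leaf e x); case: (e x u);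
  by rewrite /= ?muln0 ?muln1 ?mul1n ?mul0n ?andbF ?andbT.
have E2 : \sum_(v | ~~ leaf e v) c v * (p v + 2) = SNp + 2 * SN.
  rewrite /SNp /SN big_distrr -big_split /=; apply: eq_bigr => v _; nia.
have B1 : \sum_v (5 + 10 * p v + 5 * deg e v) = 5 * n + 10 * L + 10 * (n - 1).
  have -> : \sum_v (5 + 10 * p v + 5 * deg e v) =
     \sum_(v : V) 5 + 10 * \sum_v p v + 5 * \sum_v deg e v.
    by rewrite big_split [in LHS]big_split !big_distrr.
  have S5 : \sum_(v : V) 5 = 5 * n by rewrite sum_nat_const mulnC cardE /n cardE.
  rewrite F3 F2 S5; lia.
have B2 : \sum_(v | leaf e v) (5 + 10 * p v + 5 * deg e v) = 10 * L.
  rewrite /L big_distrr; apply: eq_bigr => v lv; by rewrite p_leaf // leafdeg.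
have B : \sum_(v | ~~ leaf e v) (5 + 10 * p v + 5 * deg e v) = 15 * n - 10.
  move: B1; rewrite (bigID (fun v => leaf e v)) /= B2; lia.
have Tw : num_twigs e = \sum_(v | ~~ leaf e v) (twig e v : nat).
  rewrite /num_twigs csum (bigID (fun v => leaf e v)) /= big1 ?add0n // => v lv.
  by case tv: (twig e v) => //; move: (twig_nl v tv); rewrite lv.
have NL : 2 * L < N.
  apply: two_leaves_lt => //; exists v0; rewrite /leaf -ltnNge; exact: iv0.
have Npos : 0 < N by lia.
have nbcount : forall v (Y : {set V}), Y \subset [set u | e v u] ->
    [disjoint Y & [set u | e v u & leaf e u]] -> p v + #|Y| <= deg e v.
  move=> v Y sY dY; rewrite /deg /p -cardsU_disj; last by rewrite disjoint_sym.
  apply: subset_leq_card; apply/subsetP => u; rewrite in_setU => /orP[|/(subsetP sY)//].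
  by rewrite !inE => /andP[].
have SUM : 20 * (\sum_(S in subtrees e) #|S|) = 20 * L + 10 * \sum_(v | ~~ leaf e v) c v * (p v + 2).
  rewrite E0 E2; lia.
rewrite SUM.
case: (boolP [exists v, ~~ leaf e v && [forall u, e v u ==> leaf e u]]) => [star|nstar].
- case/existsP: star => w /andP[nlw /forallP allL].
  have allL' : forall u, e w u -> leaf e u by move=> u; apply/implyP.
  have all := star_all sg fc allL'.
  have onlyw : forall x, ~~ leaf e x = (x == w).
    move=> x; case: (eqVneq x w) => [->|xw] //=.
    by move: (all x); rewrite (negbTE xw) /= => /allL' ->.
  have SNc : \sum_(v | ~~ leaf e v) c v * (p v + 2) = c w * (p w + 2).
    by apply: big_pred1 => x; rewrite onlyw.
  have t1 : num_twigs e <= 1.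
    rewrite Tw (big_pred1 w); last by move=> x; rewrite onlyw.
    by case: (twig e w).
  have pw : p w = L.
    rewrite -F3 (bigID (fun v => leaf e v)) /= big1 ?add0n; last by move=> v lv; rewrite p_leaf.
    by rewrite (big_pred1 w) // => x; rewrite onlyw.
  have nL : n = L + 1.
    have : \sum_(v : V) 1 = n by rewrite sum_nat_const muln1 cardE /n cardE.
    rewrite (bigID (fun v => leaf e v)) /= [X in _ + X](big_pred1 w) ?addn1; last by move=> x /=; rewrite onlyw.
    by rewrite /L => <-.
  have onl : forall a b, e w a -> e w b -> ~~ leaf e a -> ~~ leaf e b -> a = b.
    by move=> a b ea _ /negP na; exfalso; apply: na; exact: allL' ea.
  have Xpos : 0 < #|[set u | e w u & leaf e u]|.
    by rewrite -/(p w) pw; lia.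
  have [_ tl] := twig_lemma sg nlw onl Xpos.
  rewrite -/(p w) pw -/(c w) in tl.
  rewrite SNc pw nL.
  have h : (15 * L + 7) * (L + c w) <= (15 * L + 7) * N by apply: leq_mul.
  have L3 : 3 <= L by lia.
  have : num_twigs e * N <= N by rewrite -{2}(mul1n N); apply: leq_mul.
  nia.
- have nonstar : forall v, ~~ leaf e v -> exists u, e v u && ~~ leaf e u.
    move=> v nlv; move/existsPn: nstar => /(_ v); rewrite nlv /= => /forallPn [u].
    by rewrite negb_imply => h; exists u.
  have PV : forall v, ~~ leaf e v ->
      10 * (c v * (p v + 2)) + 8 * (twig e v : nat) * N <= (5 + 10 * p v + 5 * deg e v) * N.
    move=> v nlv; have dv := nl_deg v nlv; have cv := Nsub v.
    case tv: (twig e v); last by rewrite muln0 mul0n addn0; nia.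
    move: tv => /andP[_ tv']; have tv : deg e v - 1 <= p v := tv'.
    have [w /andP[ew nlw]] := nonstar v nlv.
    have dge : p v + 1 <= deg e v.
      rewrite -(cards1 w); apply: nbcount.
        by apply/subsetP => u; rewrite in_set1 inE => /eqP->.
      apply/disjP => u; rewrite in_set1 inE => /eqP-> /andP[_ lw].
      by move: nlw; rewrite lw.
    have onl : forall a b, e v a -> e v b -> ~~ leaf e a -> ~~ leaf e b -> a = b.
      move=> a b ea eb na nb; apply/eqP; apply/negPn/negP => ab.
      have h : p v + #|[set a; b]| <= deg e v.
        apply: nbcount.
          by apply/subsetP => u; rewrite !inE => /orP[/eqP->|/eqP->].
        apply/disjP => u; rewrite !inE => /orP[/eqP->|/eqP->] /andP[_ l].
          by move: na; rewrite l.
        by move: nb; rewrite l.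
      rewrite cards2 ab in h; lia.
    have p2 : 2 <= p v by lia.
    have Xpos : 0 < #|[set u | e v u & leaf e u]| by rewrite -/(p v); lia.
    have [tl _] := twig_lemma sg nlv onl Xpos.
    rewrite -/(p v) -/(c v) in tl.
    have deq : deg e v = p v + 1 by lia.
    rewrite deq /=.
    set P := 2 ^ p v in tl.
    have pi := pow_ineq p2; rewrite -/P in pi.
    have h2 : 10 * (p v + 2) * (c v * (P + 1)) <= 10 * (p v + 2) * (P * N) := leq_mul (leqnn _) tl.
    have h4 : (10 * P * (p v + 2)) * N <= ((15 * p v + 2) * (P + 1)) * N := leq_mul pi (leqnn N).
    have h5 : 10 * (c v * (p v + 2)) * (P + 1) <= (15 * p v + 2) * N * (P + 1).
      have e1 : 10 * (c v * (p v + 2)) * (P + 1) = 10 * (p v + 2) * (c v * (P + 1)) by nia.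
      have e2 : 10 * (p v + 2) * (P * N) = (10 * P * (p v + 2)) * N by nia.
      have e3 : (15 * p v + 2) * N * (P + 1) = ((15 * p v + 2) * (P + 1)) * N by nia.
      by rewrite e1 e3; apply: leq_trans h2 _; rewrite e2.
    rewrite leq_pmul2r ?addn1 // in h5.
    nia.
  have SP : \sum_(v | ~~ leaf e v) (10 * (c v * (p v + 2)) + 8 * (twig e v : nat) * N)
            <= \sum_(v | ~~ leaf e v) (5 + 10 * p v + 5 * deg e v) * N by apply: leq_sum.
  rewrite -big_distrl /= B big_split /= -big_distrr /= in SP.
  have T8 : \sum_(v | ~~ leaf e v) 8 * (twig e v : nat) * N = 8 * num_twigs e * N.
    by rewrite Tw big_distrr big_distrl.
  rewrite T8 in SP.
  nia.
Qed.

Unset Implicit Arguments.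

Theorem mainTheorem7 (V : finType) (e : rel V) :
  in_T3 e -> 4 <= #|V| ->
  (mu e < (3 * #|V|)%:R / 4%:R - (2 * num_twigs e)%:R / 5%:R)%R.
Proof.
move=> T3 n4.
have h := main_nat T3 n4.
have Npos : (0 < #|subtrees e|)%N.
  have : (0 < #|V|)%N by lia.
  by case/card_gt0P => x _; apply/card_gt0P; exists [set x]; exact: sub_single.
rewrite /mu ltr_pdivrMr ?ltr0n //.
have hr : ((20 * (\sum_(S in subtrees e) #|S|) + 8 * num_twigs e * #|subtrees e|)%:R
     < (15 * #|V| * #|subtrees e|)%:R :> rat)%R by rewrite ltr_nat.
rewrite !natrD !natrM in hr.
rewrite !natrM.
set s := ((\sum_(S in subtrees e) #|S|)%:R : rat) in hr *.
set N := (#|subtrees e|%:R : rat) in hr *.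
set n := (#|V|%:R : rat) in hr *.
set t := ((num_twigs e)%:R : rat) in hr *.
lra.
Qed.
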